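(* Let $A$ and $B$ be irreducible $\{0,1\}$-matrices, neither of which is a permutation matrix. If the one-sided topological Markov shifts $(X_A,\sigma_A)$ and $(X_B,\sigma_B)$ are coded equivalent, then they are continuously orbit equivalent.
   Context: For an $N\times N$ matrix $A=[A(i,j)]_{i,j=1}^N$ with entries in $\{0,1\}$, put $\Sigma_A=\{1,\dots,N\}$ and let $X_A$ be the set of sequences $(x_n)_{n\in\mathbb{N}}$ in $\Sigma_A$ with $A(x_n,x_{n+1})=1$ for all $n$, with the product topology and the shift $\sigma_A((x_n)_n)=(x_{n+1})_n$; $(X_A,\sigma_A)$ is the one-sided topological Markov shift. $B_k(X_A)$ is the set of admissible words of length $k$ (words occurring in elements of $X_A$), $B_0(X_A)$ is the empty word, $B_*(X_A)=\bigcup_{k\ge0}B_k(X_A)$. For a word $w=w_1w_2\cdots w_\ell$ put $\sigma_A(w)=w_2\cdots w_\ell$. A code is a nonempty $\mathcal{C}\subset B_*(X_A)$ such that whenever $\omega(i_1)\cdots\omega(i_k)=\omega(j_1)\cdots\omega(j_n)$ with all $\omega(\cdot)\in\mathcal{C}$, then $n=k$ and $\omega(i_m)=\omega(j_m)$ for all $m$. A prefix code is a code in which no word is a beginning (prefix) of another. A finite prefix code $\mathcal{C}=\{\omega(1),\dots,\omega(M)\}\subset B_*(X_A)$, with $\Sigma_{A(\mathcal{C})}=\{1,\dots,M\}$, is a right Markov code for $(X_A,\sigma_A)$ if: (i) for every $\gamma\in B_*(X_A)$ there is $\eta\in B_*(X_A)$ with $\gamma\eta\in B_*(X_A)$ and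 a unique finite sequence $(i_1,\dots,i_k)$ in $\Sigma_{A(\mathcal{C})}$ with $\gamma\eta=\omega(i_1)\cdots\omega(i_k)$; (ii) there is $L\in\mathbb{N}$ such that for all $i_1,\dots,i_L\in\Sigma_{A(\mathcal{C})}$ with $\omega(i_1)\cdots\omega(i_L)\in B_*(X_A)$ there exist $j_1,\dots,j_k\in\Sigma_{A(\mathcal{C})}$ (with $k$ depending on $(i_1,\dots,i_L)$) such that $\sigma_A(\omega(i_1))\omega(i_2)\cdots\omega(i_L)=\omega(j_1)\cdots\omega(j_k)$; (iii) for every $i,j\in\Sigma_{A(\mathcal{C})}$ there are $n_1,\dots,n_l\in\Sigma_{A(\mathcal{C})}$ with $\omega(i)\omega(n_1)\cdots\omega(n_l)\omega(j)\in B_*(X_A)$. Given a right Markov code $\mathcal{C}$, define the $M\times M$ matrix $A(\mathcal{C})(i,j)=A(r(\omega(i)),s(\omega(j)))$ where $s(\omega(i))$ and $r(\omega(i))$ are the first and last symbols of $\omega(i)$. Two shifts $(X_A,\sigma_A),(X_B,\sigma_B)$ are topologically conjugate if there is a homeomorphism $h:X_A\to X_B$ with $h\circ\sigma_A=\sigma_B\circ h$. For irreducible non-permutation $A,B$, $(X_A,\sigma_A)$ and $(X_B,\sigma_B)$ are elementary coded equivalent if there exist a right Markov code $\mathcal{C}_1$ for $(X_A,\sigma_A)$ and a right Markov code $\mathcal{C}_2$ for $(X_B,\sigma_B)$ such that $(X_{A(\mathcal{C}_1)},\sigma_{A(\mathcal{C}_1)})$ and $(X_{B(\mathcal{C}_2)},\sigma_{B(\mathcal{C}_2)})$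 are topologically conjugate; they are coded equivalent if there is a finite chain $A=A_0,A_1,\dots,A_m=B$ of irreducible non-permutation $\{0,1\}$-matrices with consecutive shifts elementary coded equivalent. $(X_A,\sigma_A)$ and $(X_B,\sigma_B)$ are continuously orbit equivalent if there exist a homeomorphism $h:X_A\to X_B$ and continuous maps $k_1,l_1:X_A\to\mathbb{Z}_+$, $k_2,l_2:X_B\to\mathbb{Z}_+$ such that $\sigma_B^{k_1(x)}(h(\sigma_A(x)))=\sigma_B^{l_1(x)}(h(x))$ for $x\in X_A$ and $\sigma_A^{k_2(y)}(h^{-1}(\sigma_B(y)))=\sigma_A^{l_2(y)}(h^{-1}(y))$ for $y\in X_B$. *)

(* Defs.v *)
From mathcomp Require Import all_boot all_algebra.

Set Implicit Arguments.
Unset Strict Implicit.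
Unset Printing Implicit Defensive.

(* A {0,1}-matrix of size N is a boolean matrix ('M[bool]_N); the symbols
   {1,...,N} are represented by 'I_N. *)

Definition is_perm_matrix (N : nat) (A : 'M[bool]_N) : Prop :=
  (forall i : 'I_N, #|[set j | A i j]| = 1%N) /\
  (forall j : 'I_N, #|[set i | A i j]| = 1%N).

(* A is irreducible: for all i, j there is n >= 1 with A^n(i,j) > 0,
   i.e. a path of positive length from i to j in the graph of A. *)
Definition irreducible (N : nat) (A : 'M[bool]_N) : Prop :=
  forall i j : 'I_N, exists w : seq 'I_N,
    [/\ (0 < size w)%N, path (fun a b => A a b) i w & last i w = j].

Definition seqs (N : nat) := nat -> 'I_N.

Definition inX (N : nat) (A : 'M[bool]_N) (x : seqs N) : Prop :=
  forall n, A (x n) (x n.+1).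

Definition shift (N : nat) (x : seqs N) : seqs N := fun n => x n.+1.
Definition shiftn (N : nat) (k : nat) (x : seqs N) : seqs N := fun n => x (k + n)%N.

Definition agree (N : nat) (m : nat) (x y : seqs N) : Prop :=
  forall i, (i < m)%N -> x i = y i.

(* continuity, on the subspace P, for the product topology (discrete factors) *)
Definition cont_on (N N' : nat) (P : seqs N -> Prop) (f : seqs N -> seqs N') : Prop :=
  forall x, P x -> forall n, exists m, forall y, P y -> agree m y x -> agree n (f y) (f x).

(* continuity, on the subspace P, of a map into Z_+ (discrete) *)
Definition cont_nat_on (N : nat) (P : seqs N -> Prop) (k : seqs N -> nat) : Prop :=
  forall x, P x -> exists m, forall y, P y -> agree m y x -> k y = k x.

(* h : X_A -> X_B is a homeomorphism with inverse g : X_B -> X_A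
   (maps on the ambient sequence spaces, restricted to X_A, X_B) *)
Definition homeo_pair (N N' : nat) (A : 'M[bool]_N) (B : 'M[bool]_N')
    (h : seqs N -> seqs N') (g : seqs N' -> seqs N) : Prop :=
  [/\ (forall x, inX A x -> inX B (h x)),
      (forall y, inX B y -> inX A (g y)),
      (forall x, inX A x -> g (h x) =1 x),
      (forall y, inX B y -> h (g y) =1 y) &
      (cont_on (inX A) h /\ cont_on (inX B) g)].

Definition top_conj (N N' : nat) (A : 'M[bool]_N) (B : 'M[bool]_N') : Prop :=
  exists (h : seqs N -> seqs N') (g : seqs N' -> seqs N),
    homeo_pair A B h g /\ (forall x, inX A x -> h (shift x) =1 shift (h x)).

(* continuous orbit equivalence; g plays the role of h^{-1} *)
Definition cont_orbit_equiv (N N' : nat) (A : 'M[bool]_N) (B : 'M[bool]_N') : Prop :=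
  exists (h : seqs N -> seqs N') (g : seqs N' -> seqs N)
         (k1 l1 : seqs N -> nat) (k2 l2 : seqs N' -> nat),
    [/\ homeo_pair A B h g,
        (cont_nat_on (inX A) k1 /\ cont_nat_on (inX A) l1),
        (cont_nat_on (inX B) k2 /\ cont_nat_on (inX B) l2),
        (forall x, inX A x ->
           shiftn (k1 x) (h (shift x)) =1 shiftn (l1 x) (h x)) &
        (forall y, inX B y ->
           shiftn (k2 y) (g (shift y)) =1 shiftn (l2 y) (g y))].

Definition admissible (N : nat) (A : 'M[bool]_N) (w : seq 'I_N) : Prop :=
  w = [::] \/
  exists x k, inX A x /\ w = mkseq (fun i => x (k + i)%N) (size w).

(* a finite family of words omega : 'I_M -> seq 'I_N *)
Definition concat (N M : nat) (om : 'I_M -> seq 'I_N) (s : seq 'I_M) : seq 'I_N :=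
  flatten (map om s).

(* code: unique factorization (this forces om to be injective) *)
Definition is_code (N M : nat) (om : 'I_M -> seq 'I_N) : Prop :=
  forall s t : seq 'I_M, concat om s = concat om t -> s = t.

Definition is_prefix_code (N M : nat) (om : 'I_M -> seq 'I_N) : Prop :=
  is_code om /\ forall i j : 'I_M, i != j -> ~~ prefix (om i) (om j).

Definition right_markov_code (N : nat) (A : 'M[bool]_N) (M : nat)
    (om : 'I_M -> seq 'I_N) : Prop :=
  [/\ ((0 < M)%N /\ forall i, admissible A (om i)),
      is_prefix_code om,
      (forall gam, admissible A gam -> exists eta,
         admissible A (gam ++ eta) /\
         exists s, gam ++ eta = concat om s /\
                   forall t, gam ++ eta = concat om t -> t = s),
      (exists L, (0 < L)%N /\
         forall (i : 'I_M) (r : seq 'I_M), size r = L.-1 ->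
           admissible A (om i ++ concat om r) ->
           exists t, behead (om i) ++ concat om r = concat om t) &
      (forall i j : 'I_M, exists s, admissible A (om i ++ concat om s ++ om j))].

(* A(C)(i,j) = A(r(omega(i)), s(omega(j))) *)
Definition code_matrix (N : nat) (A : 'M[bool]_N) (M : nat)
    (om : 'I_M -> seq 'I_N) : 'M[bool]_M :=
  \matrix_(i, j) match om i, om j with
                 | a :: w, b :: _ => A (last a w) b
                 | _, _ => false
                 end.

Definition irr_nonperm (N : nat) (A : 'M[bool]_N) : Prop :=
  irreducible A /\ ~ is_perm_matrix A.

Definition elem_coded_equiv (N N' : nat) (A : 'M[bool]_N) (B : 'M[bool]_N') : Prop :=
  irr_nonperm A /\ irr_nonperm B /\
  exists (M1 : nat) (om1 : 'I_M1 -> seq 'I_N) (M2 : nat) (om2 : 'I_M2 -> seq 'I_N'),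
    [/\ right_markov_code A om1, right_markov_code B om2 &
        top_conj (code_matrix A om1) (code_matrix B om2)].

Definition bmat := {N : nat & 'M[bool]_N}.

Inductive coded_chain : bmat -> bmat -> Prop :=
  | chain_nil (X : bmat) : irr_nonperm (projT2 X) -> coded_chain X X
  | chain_cons (X Y Z : bmat) :
      elem_coded_equiv (projT2 X) (projT2 Y) -> coded_chain Y Z -> coded_chain X Z.

Definition coded_equiv (N N' : nat) (A : 'M[bool]_N) (B : 'M[bool]_N') : Prop :=
  coded_chain (existT _ N A) (existT _ N' B).

(* Main.v *)
Set Warnings "-notation-overridden,-ambiguous-paths".
Require Import Defs.
From mathcomp Require Import all_boot all_algebra.
From mathcomp Require Import zify.
From Stdlib Require Import FunctionalExtensionality ClassicalEpsilon Classical.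

Set Implicit Arguments.
Unset Strict Implicit.
Unset Printing Implicit Defensive.

Lemma shiftn0 N (x : seqs N) : shiftn 0 x = x.
Proof. by apply: functional_extensionality => n; rewrite /shiftn add0n. Qed.

Lemma shiftnS N k (x : seqs N) : shiftn k (shift x) = shiftn k.+1 x.
Proof. by apply: functional_extensionality => n; rewrite /shiftn /shift addSn. Qed.

Lemma shift_shiftn N k (x : seqs N) : shift (shiftn k x) = shiftn k.+1 x.
Proof. by apply: functional_extensionality => n; rewrite /shiftn /shift addSnnS. Qed.

Lemma shiftnn N a b (x : seqs N) : shiftn a (shiftn b x) = shiftn (b + a) x.
Proof. by apply: functional_extensionality => n; rewrite /shiftn addnA. Qed.

Lemma inX_shiftn N (A : 'M[bool]_N) k x : inX A x -> inX A (shiftn k x).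
Proof. by move=> H n; rewrite /shiftn addnS. Qed.

Lemma inX_shift N (A : 'M[bool]_N) x : inX A x -> inX A (shift x).
Proof. by move=> H n; apply: H. Qed.

Lemma agree_le N m m' (x y : seqs N) : m' <= m -> agree m x y -> agree m' x y.
Proof. by move=> le H i Hi; apply: H; apply: leq_trans le. Qed.

Lemma feq N N' (f g : seqs N -> seqs N') x : f =1 g -> f x = g x.
Proof. by move/functional_extensionality ->. Qed.

Fixpoint cocy N (k : seqs N -> nat) n z : nat :=
  if n is n'.+1 then cocy k n' z + k (shiftn n' z) else 0.

Lemma coc N N' (A : 'M[bool]_N) (h : seqs N -> seqs N') k l :
  (forall x, inX A x -> shiftn (k x) (h (shift x)) =1 shiftn (l x) (h x)) ->
  forall n z, inX A z ->
  shiftn (cocy k n z) (h (shiftn n z)) = shiftn (cocy l n z) (h z).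
Proof.
move=> H; elim=> [|n IH] z Hz /=; first by rewrite !shiftn0.
have := functional_extensionality _ _ (H _ (inX_shiftn n Hz)).
rewrite shift_shiftn => E.
rewrite (addnC (cocy k n z)) -shiftnn E shiftnn addnC -shiftnn IH // shiftnn.
by rewrite addnC.
Qed.

Lemma comp_rel N1 N2 N3 (A1 : 'M[bool]_N1) (A2 : 'M[bool]_N2)
  (h1 : seqs N1 -> seqs N2) (h2 : seqs N2 -> seqs N3) k1 l1 k2 l2 :
  (forall x, inX A1 x -> inX A2 (h1 x)) ->
  (forall x, inX A1 x -> shiftn (k1 x) (h1 (shift x)) =1 shiftn (l1 x) (h1 x)) ->
  (forall y, inX A2 y -> shiftn (k2 y) (h2 (shift y)) =1 shiftn (l2 y) (h2 y)) ->
  forall x, inX A1 x ->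
  shiftn (cocy l2 (k1 x) (h1 (shift x)) + cocy k2 (l1 x) (h1 x)) (h2 (h1 (shift x)))
  =1 shiftn (cocy l2 (l1 x) (h1 x) + cocy k2 (k1 x) (h1 (shift x))) (h2 (h1 x)).
Proof.
move=> HA H1 H2 x Hx.
have Hu := HA _ (inX_shift Hx); have Hv := HA _ Hx.
have W := functional_extensionality _ _ (H1 _ Hx).
have E1 := coc H2 (k1 x) Hu; have E2 := coc H2 (l1 x) Hv.
rewrite W in E1; rewrite -shiftnn -E1 -shiftnn -E2 !shiftnn.
by rewrite addnC.
Qed.

Lemma cont_cocy N (A : 'M[bool]_N) k : cont_nat_on (inX A) k ->
  forall n, cont_nat_on (inX A) (cocy k n).
Proof.
move=> Hk; elim=> [|n IH] x Hx /=; first by exists 0.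
have [m1 E1] := IH x Hx; have [m2 E2] := Hk _ (inX_shiftn n Hx).
exists (maxn m1 (n + m2)) => y Hy Ha.
rewrite E1 //; last by apply: agree_le Ha; rewrite leq_maxl.
rewrite E2 //; first exact: inX_shiftn.
move=> i Hi; rewrite /shiftn; apply: Ha.
by apply: leq_trans (leq_maxr _ _); rewrite ltn_add2l.
Qed.

Lemma cont_nat_dep N N' (A : 'M[bool]_N) (B : 'M[bool]_N')
  (c : nat -> seqs N' -> nat) (nf : seqs N -> nat) (H : seqs N -> seqs N') :
  (forall n, cont_nat_on (inX B) (c n)) -> cont_nat_on (inX A) nf ->
  cont_on (inX A) H -> (forall x, inX A x -> inX B (H x)) ->
  cont_nat_on (inX A) (fun x => c (nf x) (H x)).
Proof.
move=> Hc Hn HH HAB x Hx.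
have [m0 E0] := Hn x Hx; have [m1 E1] := Hc (nf x) (H x) (HAB _ Hx).
have [m2 E2] := HH x Hx m1.
exists (maxn m0 m2) => y Hy Ha.
rewrite E0 //; last by apply: agree_le Ha; rewrite leq_maxl.
apply: E1; first exact: HAB.
by apply: E2 => //; apply: agree_le Ha; rewrite leq_maxr.
Qed.

Lemma cont_nat_add N (P : seqs N -> Prop) f g :
  cont_nat_on P f -> cont_nat_on P g -> cont_nat_on P (fun x => f x + g x).
Proof.
move=> Hf Hg x Hx; have [m1 E1] := Hf x Hx; have [m2 E2] := Hg x Hx.
exists (maxn m1 m2) => y Hy Ha.
by rewrite E1 ?E2 //; apply: agree_le Ha; rewrite ?leq_maxl ?leq_maxr.
Qed.

Lemma cont_comp N1 N2 N3 (A1 : 'M[bool]_N1) (A2 : 'M[bool]_N2)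
  (f : seqs N1 -> seqs N2) (g : seqs N2 -> seqs N3) :
  (forall x, inX A1 x -> inX A2 (f x)) ->
  cont_on (inX A1) f -> cont_on (inX A2) g -> cont_on (inX A1) (fun x => g (f x)).
Proof.
move=> HA Hf Hg x Hx n.
have [m2 E2] := Hg _ (HA _ Hx) n; have [m1 E1] := Hf x Hx m2.
exists m1 => y Hy Ha; apply: E2; first exact: HA.
exact: E1.
Qed.

Lemma cont_shift N (A : 'M[bool]_N) : cont_on (inX A) (@shift N).
Proof. by move=> x Hx n; exists n.+1 => y Hy Ha i Hi; apply: Ha. Qed.

Lemma coe_refl N (A : 'M[bool]_N) : cont_orbit_equiv A A.
Proof.
exists id, id, (fun _ => 0), (fun _ => 1), (fun _ => 0), (fun _ => 1); split.
- by split => //; split=> x _ n; exists n.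
- by split=> x _; exists 0.
- by split=> x _; exists 0.
- by move=> x _ n.
- by move=> x _ n.
Qed.

Lemma coe_sym N N' (A : 'M[bool]_N) (B : 'M[bool]_N') :
  cont_orbit_equiv A B -> cont_orbit_equiv B A.
Proof.
move=> [h [g [k1 [l1 [k2 [l2 [[H1 H2 H3 H4 [H5 H6]] Hc1 Hc2 R1 R2]]]]]]].
by exists g, h, k2, l2, k1, l1; split.
Qed.

Lemma coe_trans N1 N2 N3 (A1 : 'M[bool]_N1) (A2 : 'M[bool]_N2) (A3 : 'M[bool]_N3) :
  cont_orbit_equiv A1 A2 -> cont_orbit_equiv A2 A3 -> cont_orbit_equiv A1 A3.
Proof.
move=> [h [g [k1 [l1 [k2 [l2 [[H1 H2 H3 H4 [H5 H6]] [Ck1 Cl1] [Ck2 Cl2] R1 R2]]]]]]].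
move=> [h' [g' [k1' [l1' [k2' [l2' [[H1' H2' H3' H4' [H5' H6']] [Ck1' Cl1'] [Ck2' Cl2'] R1' R2']]]]]]].
exists (fun x => h' (h x)), (fun y => g (g' y)).
exists (fun x => cocy l1' (k1 x) (h (shift x)) + cocy k1' (l1 x) (h x)).
exists (fun x => cocy l1' (l1 x) (h x) + cocy k1' (k1 x) (h (shift x))).
exists (fun y => cocy l2 (k2' y) (g' (shift y)) + cocy k2 (l2' y) (g' y)).
exists (fun y => cocy l2 (l2' y) (g' y) + cocy k2 (k2' y) (g' (shift y))).
split.
- split.
  + by move=> x Hx; apply: H1'; apply: H1.
  + by move=> y Hy; apply: H2; apply: H2'.
  + by move=> x Hx n; rewrite (functional_extensionality _ _ (H3' _ (H1 _ Hx))) H3.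
  + by move=> y Hy n; rewrite (functional_extensionality _ _ (H4 _ (H2' _ Hy))) H4'.
  + by split; [apply: (cont_comp H1) | apply: (cont_comp H2')].
- have Cs : cont_on (inX A1) (fun x => h (shift x)).
    by apply: (cont_comp (A2 := A1)) => //; [exact: inX_shift | exact: cont_shift].
  have Hs : forall x, inX A1 x -> inX A2 (h (shift x)).
    by move=> x Hx; apply: H1; apply: inX_shift.
  split; apply: cont_nat_add.
  + exact: (cont_nat_dep (cont_cocy Cl1') Ck1 Cs Hs).
  + exact: (cont_nat_dep (cont_cocy Ck1') Cl1 H5 H1).
  + exact: (cont_nat_dep (cont_cocy Cl1') Cl1 H5 H1).
  + exact: (cont_nat_dep (cont_cocy Ck1') Ck1 Cs Hs).
- have Cs : cont_on (inX A3) (fun x => g' (shift x)).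
    by apply: (cont_comp (A2 := A3)) => //; [exact: inX_shift | exact: cont_shift].
  have Hs : forall x, inX A3 x -> inX A2 (g' (shift x)).
    by move=> x Hx; apply: H2'; apply: inX_shift.
  split; apply: cont_nat_add.
  + exact: (cont_nat_dep (cont_cocy Cl2) Ck2' Cs Hs).
  + exact: (cont_nat_dep (cont_cocy Ck2) Cl2' H6' H2').
  + exact: (cont_nat_dep (cont_cocy Cl2) Cl2' H6' H2').
  + exact: (cont_nat_dep (cont_cocy Ck2) Ck2' Cs Hs).
- exact: (comp_rel (A2 := A2) H1 R1 R1').
- exact: (comp_rel (A2 := A2) H2' R2' R2).
Qed.

Lemma conj_coe N N' (A : 'M[bool]_N) (B : 'M[bool]_N') :
  top_conj A B -> cont_orbit_equiv A B.
Proof.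
move=> [h [g [[H1 H2 H3 H4 [H5 H6]] Hs]]].
exists h, g, (fun _ => 0), (fun _ => 1), (fun _ => 0), (fun _ => 1); split.
- by split.
- by split=> x _; exists 0.
- by split=> x _; exists 0.
- by move=> x Hx n; rewrite /shiftn add0n Hs.
- move=> y Hy n; rewrite /shiftn add0n.
  have Ey := functional_extensionality _ _ (H4 _ Hy).
  have Hg := H2 _ Hy.
  have E : shift y = h (shift (g y)).
    by apply: functional_extensionality => i; rewrite Hs // /shift Ey.
  by rewrite E H3 //; apply: inX_shift.
Qed.
Lemma mkseq_add T (x : nat -> T) a b :
  mkseq x (a + b) = mkseq x a ++ mkseq (fun i => x (a + i)) b.
Proof.
rewrite /mkseq iotaD map_cat add0n.
have -> : iota a b = map (addn a) (iota 0 b) by rewrite -iotaDl addn0.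
by rewrite -map_comp.
Qed.

Lemma mkseq_cons N (x : seqs N) n : mkseq x n.+1 = x 0 :: mkseq (shift x) n.
Proof. by rewrite -add1n mkseq_add. Qed.

Lemma concat_cat N M (om : 'I_M -> seq 'I_N) s t :
  concat om (s ++ t) = concat om s ++ concat om t.
Proof. by rewrite /concat map_cat flatten_cat. Qed.

Lemma concat_cons N M (om : 'I_M -> seq 'I_N) i s :
  concat om (i :: s) = om i ++ concat om s.
Proof. by []. Qed.

Lemma size_concat_ge N M (om : 'I_M -> seq 'I_N) s :
  (forall i, 0 < size (om i)) -> size s <= size (concat om s).
Proof.
move=> Hne; elim: s => [|i s IH] //=.
by rewrite /concat /= size_cat -add1n leq_add.
Qed.

Definition hcode N M (d : 'I_N) (om : 'I_M -> seq 'I_N) (x : seqs M) : seqs N :=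
  fun n => nth d (concat om (mkseq x n.+1)) n.

Lemma nth_concat_mkseq N M d (om : 'I_M -> seq 'I_N) (x : seqs M) m n :
  (forall i, 0 < size (om i)) ->
  n < size (concat om (mkseq x m)) ->
  nth d (concat om (mkseq x m)) n = hcode d om x n.
Proof.
move=> Hne Hn; rewrite /hcode; case: (leqP m n.+1) => Hm.
  by rewrite -(subnKC Hm) mkseq_add concat_cat nth_cat Hn.
have E : mkseq x m = mkseq x n.+1 ++ mkseq (fun i => x (n.+1 + i)) (m - n.+1).
  by rewrite -mkseq_add subnKC // ltnW.
rewrite E concat_cat nth_cat.
have -> // : n < size (concat om (mkseq x n.+1)).
by apply: leq_trans (size_concat_ge _ Hne); rewrite size_mkseq.
Qed.

Lemma hcode_prefix N M d (om : 'I_M -> seq 'I_N) (x : seqs M) m :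
  (forall i, 0 < size (om i)) ->
  mkseq (hcode d om x) (size (concat om (mkseq x m))) = concat om (mkseq x m).
Proof.
move=> Hne; apply: (@eq_from_nth _ d); first by rewrite size_mkseq.
by move=> i; rewrite size_mkseq => Hi; rewrite nth_mkseq // nth_concat_mkseq.
Qed.

Lemma hcode_head N M d (om : 'I_M -> seq 'I_N) (x : seqs M) i :
  (forall i, 0 < size (om i)) ->
  i < size (om (x 0)) -> hcode d om x i = nth d (om (x 0)) i.
Proof.
move=> Hne Hi; rewrite -(@nth_concat_mkseq _ _ d om x 1 i Hne) //= /concat /= cats0 //.
Qed.

Lemma hcode_shift N M d (om : 'I_M -> seq 'I_N) (x : seqs M) n :
  (forall i, 0 < size (om i)) ->
  hcode d om x (size (om (x 0)) + n) = hcode d om (shift x) n.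
Proof.
move=> Hne.
have Hs : size (om (x 0)) + n < size (concat om (mkseq x n.+2)).
  rewrite mkseq_cons concat_cons size_cat ltn_add2l.
  by apply: leq_trans (size_concat_ge _ Hne); rewrite size_mkseq.
rewrite -(nth_concat_mkseq _ Hne Hs) mkseq_cons concat_cons nth_cat.
rewrite ltnNge leq_addr /= addKn.
apply: nth_concat_mkseq => //.
by apply: leq_trans (size_concat_ge _ Hne); rewrite size_mkseq.
Qed.
Definition first N M (d : 'I_M) (om : 'I_M -> seq 'I_N) (y : seqs N) : 'I_M :=
  odflt d [pick i | om i == mkseq y (size (om i))].
Definition skip N M (d : 'I_M) (om : 'I_M -> seq 'I_N) (y : seqs N) : seqs N :=
  shiftn (size (om (first d om y))) y.
Definition gcode N M (d : 'I_M) (om : 'I_M -> seq 'I_N) (y : seqs N) : seqs M :=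
  fun n => first d om (iter n (skip d om) y).

Lemma take_mkseq T (y : nat -> T) a b : a <= b -> take a (mkseq y b) = mkseq y a.
Proof.
by move=> H; rewrite -(subnKC H) mkseq_add take_size_cat // size_mkseq.
Qed.

Lemma prefix_code_uniq N M (om : 'I_M -> seq 'I_N) (y : seqs N) i j :
  is_prefix_code om -> om i = mkseq y (size (om i)) ->
  om j = mkseq y (size (om j)) -> i = j.
Proof.
move=> [_ Hp].
wlog le : i j / size (om i) <= size (om j).
  move=> W Ei Ej; case: (leqP (size (om i)) (size (om j))) => H; first exact: W.
  by symmetry; apply: W => //; apply: ltnW.
move=> Ei Ej; apply/eqP; apply: contraT => Hij.
by have := Hp i j Hij; rewrite prefixE Ej take_mkseq // -Ei eqxx.
Qed.

Lemma first_eq N M d (om : 'I_M -> seq 'I_N) (y : seqs N) i :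
  is_prefix_code om -> om i = mkseq y (size (om i)) -> first d om y = i.
Proof.
move=> Hp Hi; rewrite /first; case: pickP => [j /eqP Hj | H] /=.
  exact: (prefix_code_uniq Hp Hj Hi).
by have := H i; rewrite -Hi eqxx.
Qed.

Lemma first_ex N (A : 'M[bool]_N) M d (om : 'I_M -> seq 'I_N) (y : seqs N) :
  right_markov_code A om -> inX A y ->
  om (first d om y) = mkseq y (size (om (first d om y))).
Proof.
move=> [[HM Had] Hpc Hi Hii Hiii] Hy.
suff [i Ei] : exists i, om i = mkseq y (size (om i)).
  by rewrite (first_eq d Hpc Ei).
pose Lmax := \max_(i < M) size (om i).
have Hg : admissible A (mkseq y Lmax.+1).
  right; exists y, 0; split => //; rewrite size_mkseq.
  by apply: eq_mkseq => j; rewrite add0n.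
have [eta [_ [s [Es _]]]] := Hi _ Hg.
case: s Es => [|i s] Es.
  by move: (congr1 size Es); rewrite size_cat size_mkseq.
exists i; rewrite concat_cons in Es.
have Hle : size (om i) <= Lmax := @leq_bigmax _ (fun i => size (om i)) i.
have := congr1 (take (size (om i))) Es.
rewrite take_cat size_mkseq ltnS Hle take_mkseq ?(leqW Hle) //.
by rewrite (take_size_cat _ (erefl _)) => ->.
Qed.

Lemma gcode0 N M d (om : 'I_M -> seq 'I_N) y : gcode d om y 0 = first d om y.
Proof. by []. Qed.

Lemma gcodeS N M d (om : 'I_M -> seq 'I_N) y n :
  gcode d om y n.+1 = gcode d om (skip d om y) n.
Proof. by rewrite /gcode iterSr. Qed.

Lemma gcode_shift N M d (om : 'I_M -> seq 'I_N) y :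
  shift (gcode d om y) = gcode d om (skip d om y).
Proof. by apply: functional_extensionality => n; rewrite /shift gcodeS. Qed.

Lemma skip_inX N (A : 'M[bool]_N) M d (om : 'I_M -> seq 'I_N) y :
  inX A y -> inX A (skip d om y).
Proof. exact: inX_shiftn. Qed.

Lemma iter_inX N (A : 'M[bool]_N) M d (om : 'I_M -> seq 'I_N) y n :
  inX A y -> inX A (iter n (skip d om) y).
Proof. by move=> Hy; elim: n => [|n IH] //=; apply: skip_inX. Qed.

Lemma concat_gcode N (A : 'M[bool]_N) M d (om : 'I_M -> seq 'I_N) m y :
  right_markov_code A om -> inX A y ->
  concat om (mkseq (gcode d om y) m) =
  mkseq y (size (concat om (mkseq (gcode d om y) m))).
Proof.
move=> Hc; elim: m y => [|m IH] y Hy //.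
rewrite mkseq_cons gcode_shift concat_cons IH; last exact: skip_inX.
rewrite size_cat size_mkseq mkseq_add gcode0; congr (_ ++ _).
exact: (first_ex d Hc Hy).
Qed.

Lemma hcode_gcode N (A : 'M[bool]_N) M d d' (om : 'I_M -> seq 'I_N) y n :
  right_markov_code A om -> inX A y -> (forall i, 0 < size (om i)) ->
  hcode d om (gcode d' om y) n = y n.
Proof.
move=> Hc Hy Hne; rewrite /hcode (concat_gcode _ _ Hc Hy) nth_mkseq //.
by apply: leq_trans (size_concat_ge _ Hne); rewrite size_mkseq.
Qed.

Lemma first_hcode N M d d' (om : 'I_M -> seq 'I_N) z :
  is_prefix_code om -> (forall i, 0 < size (om i)) ->
  first d' om (hcode d om z) = z 0.
Proof.
move=> Hp Hne; apply: first_eq => //.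
have E1 : concat om (mkseq z 1) = om (z 0) by rewrite /concat /= cats0.
by have := hcode_prefix d z 1 Hne; rewrite E1 => ->.
Qed.

Lemma gcode_hcode N M d d' (om : 'I_M -> seq 'I_N) x n :
  is_prefix_code om -> (forall i, 0 < size (om i)) ->
  gcode d' om (hcode d om x) n = x n.
Proof.
move=> Hp Hne.
have E : forall n, iter n (skip d' om) (hcode d om x) = hcode d om (shiftn n x).
  elim=> [|k IH]; first by rewrite shiftn0.
  rewrite iterS IH /skip first_hcode //; apply: functional_extensionality => i.
  by have := hcode_shift d (shiftn k x) i Hne; rewrite shift_shiftn => <-.
by rewrite /gcode E first_hcode // /shiftn addn0.
Qed.

Lemma mkseq_agree N m k (y y' : seqs N) :
  agree m y' y -> k <= m -> mkseq y' k = mkseq y k.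
Proof.
move=> Ha Hk; apply: (@eq_from_nth _ (y 0)); rewrite !size_mkseq // => i Hi.
by rewrite !nth_mkseq //; apply: Ha; apply: leq_trans Hk.
Qed.

Lemma first_agree N M d (om : 'I_M -> seq 'I_N) (y y' : seqs N) :
  agree (\max_(i < M) size (om i)) y' y -> first d om y' = first d om y.
Proof.
move=> Ha; rewrite /first; congr odflt; apply: eq_pick => i /=.
by rewrite (mkseq_agree Ha) // (@leq_bigmax _ (fun i => size (om i)) i).
Qed.

Lemma gcode_agree N M d (om : 'I_M -> seq 'I_N) n : forall (y y' : seqs N),
  agree (n.+1 * \max_(i < M) size (om i)) y' y -> gcode d om y' n = gcode d om y n.
Proof.
set L := \max_(i < M) size (om i).
elim: n => [|n IH] y y' Ha.
  by rewrite !gcode0; apply: first_agree; rewrite mul1n in Ha.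
have Hf : first d om y' = first d om y.
  by apply: first_agree; apply: agree_le Ha; apply: leq_pmull.
rewrite !gcodeS; apply: IH => i Hi; rewrite /skip Hf /shiftn; apply: Ha.
have Hs : size (om (first d om y)) <= L := @leq_bigmax _ (fun i => size (om i)) _.
rewrite mulSn; lia.
Qed.

Lemma cont_gcode N (A : 'M[bool]_N) M d (om : 'I_M -> seq 'I_N) :
  cont_on (inX A) (gcode d om).
Proof.
move=> x Hx n; exists (n * \max_(i < M) size (om i)) => y Hy Ha i Hi.
by apply: gcode_agree; apply: agree_le Ha; apply: leq_mul.
Qed.

Lemma cont_hcode N M (C : 'M[bool]_M) d (om : 'I_M -> seq 'I_N) :
  cont_on (inX C) (hcode d om).
Proof.
move=> x Hx n; exists n => y Hy Ha i Hi.
by rewrite /hcode (mkseq_agree Ha).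
Qed.

Lemma code_entry N (A : 'M[bool]_N) M d (om : 'I_M -> seq 'I_N) i j :
  (forall i, 0 < size (om i)) ->
  code_matrix A om i j = A (nth d (om i) (size (om i)).-1) (nth d (om j) 0).
Proof.
move=> Hne; rewrite mxE; have := Hne i; have := Hne j.
case: (om i) => [|a w] //; case: (om j) => [|b w'] // _ _.
by rewrite nth_last.
Qed.

Lemma adm_step N (A : 'M[bool]_N) d w i :
  admissible A w -> i.+1 < size w -> A (nth d w i) (nth d w i.+1).
Proof.
case=> [-> // | [z [k [Hz Ew]]]] Hi.
by rewrite Ew !nth_mkseq ?addnS //; apply: ltnW.
Qed.
Lemma gcode_inX N (A : 'M[bool]_N) M (d : 'I_N) (d' : 'I_M) (om : 'I_M -> seq 'I_N) y :
  right_markov_code A om -> (forall i, 0 < size (om i)) -> inX A y ->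
  inX (code_matrix A om) (gcode d' om y).
Proof.
move=> Hc Hne Hy n; rewrite (code_entry _ d) // /gcode iterS.
set z := iter n (skip d' om) y.
have Hz : inX A z by apply: iter_inX.
have Ez := first_ex d' Hc Hz; have Es := first_ex d' Hc (skip_inX d' om Hz).
rewrite Ez Es size_mkseq.
have := Hne (first d' om z); have := Hne (first d' om (skip d' om z)).
case: (size (om (first d' om (skip d' om z)))) => [|S'] // _.
rewrite /skip.
case: (size (om (first d' om z))) => [|S] // _.
by rewrite !nth_mkseq //= /shiftn addn0.
Qed.

Lemma hcode_inX N (A : 'M[bool]_N) M d (om : 'I_M -> seq 'I_N) n : forall x,
  right_markov_code A om -> (forall i, 0 < size (om i)) ->
  inX (code_matrix A om) x -> A (hcode d om x n) (hcode d om x n.+1).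
Proof.
elim/ltn_ind: n => n IH x Hc Hne Hx.
have Had : forall i, admissible A (om i) by case: Hc => [[_ H]].
case: (ltngtP n.+1 (size (om (x 0)))) => H.
- rewrite !hcode_head //; first exact: adm_step.
  exact: ltnW.
- have E1 : n = size (om (x 0)) + (n - size (om (x 0))) by rewrite subnKC.
  have E2 : n.+1 = size (om (x 0)) + (n - size (om (x 0))).+1 by rewrite addnS -E1.
  rewrite {1}E1 E2 !hcode_shift //; apply: IH => //; last exact: inX_shift.
  by have := Hne (x 0); lia.
- have := Hx 0; rewrite (code_entry _ d) // -H /=.
  have h1 : hcode d om x n = nth d (om (x 0)) n by apply: hcode_head; rewrite // -H.
  have h2 : hcode d om x n.+1 = nth d (om (x 1)) 0.
    by rewrite H -[size _]addn0 hcode_shift // hcode_head.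
  by rewrite h1 h2.
Qed.

Lemma decode N (A : 'M[bool]_N) M d (om : 'I_M -> seq 'I_N) t : forall y,
  right_markov_code A om -> inX A y ->
  concat om t = mkseq y (size (concat om t)) ->
  shiftn (size t) (gcode d om y) = gcode d om (shiftn (size (concat om t)) y).
Proof.
have Hpc : right_markov_code A om -> is_prefix_code om by case.
elim: t => [|i t IH] y Hc Hy E; first by rewrite /= !shiftn0.
rewrite concat_cons in E *.
have Ei : om i = mkseq y (size (om i)).
  have := congr1 (take (size (om i))) E.
  by rewrite take_size_cat // take_mkseq // size_cat leq_addr.
have Fy : first d om y = i by apply: first_eq; [apply: Hpc | ].
have Et : concat om t = mkseq (skip d om y) (size (concat om t)).
  have := congr1 (drop (size (om i))) E.
  rewrite drop_size_cat // size_cat mkseq_add drop_size_cat ?size_mkseq //.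
  by rewrite /skip Fy.
rewrite /= -shiftnS gcode_shift IH //; last exact: skip_inX.
by rewrite /skip Fy shiftnn size_cat.
Qed.
Lemma behead_mkseq N (y : seqs N) P : behead (mkseq y P) = mkseq (shift y) P.-1.
Proof. by case: P => [|P] //; rewrite mkseq_cons. Qed.

Lemma code_coe N (A : 'M[bool]_N) M (om : 'I_M -> seq 'I_N) :
  right_markov_code A om -> cont_orbit_equiv (code_matrix A om) A.
Proof.
move=> Hc; have Hc' := Hc; case: Hc' => [[HM Had] Hpc Hi [L [HL HL2]] Hiii].
have Hne : forall i, 0 < size (om i).
  move=> i; case: Hpc => Hcode _; rewrite lt0n size_eq0; apply/eqP => E.
  have := Hcode [:: i] [::]; rewrite /concat /= E => /(_ erefl) H0.
  by inversion H0.
pose d' : 'I_M := Ordinal HM.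
have d : 'I_N by case: (om d') (Hne d') => [|a w].
have HF : forall (i : 'I_M) (r : seq 'I_M), exists t, size r = L.-1 ->
    admissible A (om i ++ concat om r) -> behead (om i) ++ concat om r = concat om t.
  move=> i r; case: (classic (size r = L.-1 /\ admissible A (om i ++ concat om r)))
    => [[H1 H2]|Hn].
  - by have [t Ht] := HL2 i r H1 H2; exists t.
  - by exists [::] => H1 H2; exfalso; apply: Hn.
pose F i r := proj1_sig (constructive_indefinite_description _ (HF i r)).
have FP : forall i r, size r = L.-1 -> admissible A (om i ++ concat om r) ->
    behead (om i) ++ concat om r = concat om (F i r).
  by move=> i r; apply: (proj2_sig (constructive_indefinite_description _ (HF i r))).
exists (hcode d om), (gcode d' om), (fun _ => 0), (fun x => size (om (x 0))).
exists (fun y => size (F (gcode d' om y 0) (mkseq (fun n => gcode d' om y n.+1) L.-1))).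
exists (fun _ => L).
split.
- split.
  + by move=> x Hx n; apply: hcode_inX.
  + by move=> y Hy; apply: gcode_inX.
  + by move=> x _ n; apply: gcode_hcode.
  + by move=> y Hy n; apply: (hcode_gcode d d' n Hc Hy Hne).
  + by split; [apply: cont_hcode | apply: cont_gcode].
- split; first by move=> x _; exists 0.
  by move=> x _; exists 1 => y _ Ha; rewrite (Ha 0).
- split; last by move=> y _; exists 0.
  move=> y Hy; have [m Hm] := @cont_gcode N A M d' om y Hy L.
  exists m => y' Hy' Ha; have Hg := Hm y' Hy' Ha.
  rewrite (Hg 0) //; congr (size (F _ _)).
  apply: (@eq_from_nth _ d'); rewrite !size_mkseq // => j Hj.
  by rewrite !nth_mkseq // Hg //; lia.
- by move=> x Hx n; rewrite /shiftn add0n hcode_shift.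
- move=> y Hy /=.
  have Es0 : mkseq (gcode d' om y) L =
      gcode d' om y 0 :: mkseq (fun n => gcode d' om y n.+1) L.-1.
    by rewrite -{1}(prednK HL) mkseq_cons.
  have EW := concat_gcode d' L Hc Hy.
  have Hadm : admissible A (om (gcode d' om y 0) ++
       concat om (mkseq (fun n => gcode d' om y n.+1) L.-1)).
    rewrite -concat_cons -Es0 EW; right; exists y, 0; split => //.
    by rewrite size_mkseq; apply: eq_mkseq => j; rewrite add0n.
  have Ht := FP _ _ (size_mkseq _ _) Hadm.
  set P := size (concat om (mkseq (gcode d' om y) L)) in EW.
  have HP : 0 < P.
    by apply: leq_trans (size_concat_ge _ Hne); rewrite size_mkseq.
  have Ct : concat om (F (gcode d' om y 0) (mkseq (fun n => gcode d' om y n.+1) L.-1))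
      = mkseq (shift y) P.-1.
    rewrite -Ht -behead_mkseq -EW Es0 concat_cons.
    by case: (om (gcode d' om y 0)) (Hne (gcode d' om y 0)) => [|a w].
  have Ct' : concat om (F (gcode d' om y 0) (mkseq (fun n => gcode d' om y n.+1) L.-1))
      = mkseq (shift y) (size (concat om
          (F (gcode d' om y 0) (mkseq (fun n => gcode d' om y n.+1) L.-1)))).
    by rewrite {1}Ct Ct size_mkseq.
  have D2 := decode d' Hc (inX_shift Hy) Ct'.
  have D1 := decode d' Hc Hy EW.
  rewrite size_mkseq in D1.
  move=> n; rewrite D2 Ct size_mkseq shiftnS prednK // -D1.
  by [].
Qed.

Lemma chain_coe X Y : coded_chain X Y -> cont_orbit_equiv (projT2 X) (projT2 Y).
Proof.
elim => [Z _ | X' Y' Z [_ [_ [M1 [om1 [M2 [om2 [H1 H2 Hc]]]]]]] _ IH].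
- exact: coe_refl.
- eapply coe_trans; last exact: IH.
  eapply coe_trans; last exact: (code_coe H2).
  eapply coe_trans; last exact: (conj_coe Hc).
  exact: (coe_sym (code_coe H1)).
Qed.

Theorem mainTheorem1 (N N' : nat) (A : 'M[bool]_N) (B : 'M[bool]_N') :
  irreducible A -> ~ is_perm_matrix A ->
  irreducible B -> ~ is_perm_matrix B ->
  coded_equiv A B -> cont_orbit_equiv A B.
Proof. by move=> _ _ _ _ H; apply: (chain_coe H). Qed.
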